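(* Let $\kappa$ be a gravitational lens satisfying the conditions in the context, and let $\alpha(x)=\frac{2}{x}\int_0^x\kappa(t)\,t\,dt$ for $x>0$ be its normalized deflection angle. An Einstein ring is a radius $x_E>0$ with $\alpha(x_E)=x_E$. If an Einstein ring exists, then there is exactly one.
   Context: A gravitational lens (in a single lens plane) is given by a normalized surface density $\kappa$ on the plane $\mathbb{R}^2$ satisfying: (i) Continuity: $\kappa:\mathbb{R}^2\to[0,\infty)$ is continuous, except possibly at the origin for singular lenses. (ii) Circular symmetry: $\kappa$ depends only on the radius $x=\|\mathbf{x}\|$; write $\kappa=\kappa(x)$. (iii) Finiteness: $\kappa(x)<\infty$ for $x>0$; $\kappa(0)=1/C_1$ for a constant $C_1\ge 0$ (so $\kappa(0)=+\infty$ when $C_1=0$); and $\lim_{x\to\infty}\kappa(x)\,x=C_2$ for a constant $0\le C_2<\infty$. (iv) Self-gravitation: $\kappa(x)<\bar\kappa(x)$ for $x>0$, where $\bar\kappa(x)=\frac{2}{x^2}\int_0^x\kappa(t)\,t\,dt$. The lens is called singular if and only if $C_1=0$, and non-singular otherwise. The deflection angle $\alpha$ is the radial derivative of the lensing potential $f$ solving $\Delta f=2\kappa$, which for a circularly symmetric lens is $\alpha(x)=\frac{2}{x}\int_0^x\kappa(t)\,t\,dt$. *)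

(* Defs.v *)
From Stdlib Require Import Reals.
From Coquelicot Require Import Coquelicot.
Open Scope R_scope.

Definition mass (kappa : R -> R) (x : R) : R :=
  RInt_gen (fun t => kappa t * t) (at_right 0) (at_point x).

Definition kbar (kappa : R -> R) (x : R) : R := 2 / x ^ 2 * mass kappa x.

Definition alpha (kappa : R -> R) (x : R) : R := 2 / x * mass kappa x.

(* kappa : R -> R is the radial profile of the circularly symmetric
   surface density, kappa(x) = kappa(||x||).  Conditions (i)-(iv). *)
Definition is_lens (kappa : R -> R) (C1 C2 : R) : Prop :=
  (forall x, 0 < x -> continuous kappa x) /\
  (forall x, 0 < x -> 0 <= kappa x) /\
  0 <= C1 /\
  (0 < C1 -> kappa 0 = / C1 /\ filterlim kappa (at_right 0) (locally (/ C1))) /\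
  0 <= C2 /\
  filterlim (fun x => kappa x * x) (Rbar_locally p_infty) (locally C2) /\
  (forall x, 0 < x -> ex_RInt_gen (fun t => kappa t * t) (at_right 0) (at_point x)) /\
  (forall x, 0 < x -> kappa x < kbar kappa x).

Definition einstein_ring (kappa : R -> R) (xE : R) : Prop :=
  0 < xE /\ alpha kappa xE = xE.

(* Main.v *)
Require Import Defs.
From Stdlib Require Import Reals Lra.
From Coquelicot Require Import Coquelicot.
Open Scope R_scope.

Lemma mass_derive kappa :
  (forall x, 0 < x -> continuous kappa x) ->
  (forall x, 0 < x -> ex_RInt_gen (fun t => kappa t * t) (at_right 0) (at_point x)) ->
  forall c, 0 < c -> is_derive (mass kappa) c (kappa c * c).
Proof.
  intros Hc Hex c Hcpos.
  set (f := fun t => kappa t * t).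
  assert (Hcf : forall x, 0 < x -> continuous f x).
  { intros x Hx. unfold f. apply (continuous_mult kappa (fun t => t)).
    - now apply Hc.
    - apply continuous_id. }
  set (m0 := mass kappa (c/2)).
  assert (Hloc : locally c (fun y => is_RInt f (c/2) y (mass kappa y - m0))).
  { assert (Hp : 0 < c/2) by lra.
    exists (mkposreal _ Hp). intros y Hy.
    change (Rabs (y - c) < c/2) in Hy.
    apply Rabs_def2 in Hy.
    assert (Hy0 : 0 < y) by lra.
    assert (HI : ex_RInt f (c/2) y).
    { apply (@ex_RInt_continuous R_CompleteNormedModule). intros z Hz. apply Hcf.
      apply Rlt_le_trans with (Rmin (c/2) y). apply Rmin_glb_lt; lra. apply Hz. }
    assert (Hm0 : is_RInt_gen f (at_right 0) (at_point (c/2)) m0).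
    { apply (@RInt_gen_correct R_CompleteNormedModule _ _ (Proper_StrongProper _ (at_right_proper_filter 0)) (Proper_StrongProper _ (at_point_filter _))). apply Hex. lra. }
    assert (H2 : is_RInt_gen f (at_point (c/2)) (at_point y) (RInt f (c/2) y)).
    { apply is_RInt_gen_at_point. apply (@RInt_correct R_CompleteNormedModule). exact HI. }
    pose proof (is_RInt_gen_Chasles f (c/2) _ _ Hm0 H2) as H3.
    apply (@is_RInt_gen_unique R_CompleteNormedModule _ _ (Proper_StrongProper _ (at_right_proper_filter 0)) (Proper_StrongProper _ (at_point_filter _))) in H3.
    replace (mass kappa y) with (plus m0 (RInt f (c / 2) y)) by (symmetry; exact H3).
    replace (plus m0 (RInt f (c / 2) y) - m0) with (RInt f (c/2) y) 
      by (unfold plus; simpl; symmetry; apply (Rplus_minus_l m0)).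
    apply (@RInt_correct R_CompleteNormedModule). exact HI. }
  pose proof (is_derive_RInt f (fun y => mass kappa y - m0) (c/2) c Hloc (Hcf c Hcpos)) as D.
  apply (is_derive_ext (fun y => (mass kappa y - m0) + m0)).
  intros t; change (mass kappa t - m0 + m0 = mass kappa t); ring.
  replace (kappa c * c) with (f c + 0) by (unfold f; ring).
  apply (is_derive_plus _ (fun _ => m0)). exact D. exact (@is_derive_const R_AbsRing R_NormedModule m0 c).
Qed.

Lemma h_derive kappa :
  (forall x, 0 < x -> continuous kappa x) ->
  (forall x, 0 < x -> ex_RInt_gen (fun t => kappa t * t) (at_right 0) (at_point x)) ->
  forall c, 0 < c -> is_derive (fun y => mass kappa y * / y^2) c
     (kappa c * c * / c^2 + mass kappa c * (- (2*c) / (c^2)^2)).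
Proof.
  intros Hc Hex c Hcpos.
  assert (Hi : is_derive (fun y : R => / y^2) c (- (2*c) / (c^2)^2)).
  { auto_derive. nra. field. lra. }
  pose proof (is_derive_mult (mass kappa) (fun y => / y^2) c _ _ (mass_derive kappa Hc Hex c Hcpos) Hi) as H.
  apply H. intros; apply Rmult_comm.
Qed.

Theorem theorem2 (kappa : R -> R) (C1 C2 : R) :
  is_lens kappa C1 C2 ->
  (exists xE, einstein_ring kappa xE) ->
  exists! xE, einstein_ring kappa xE.
Proof.
  intros [Hc [Hpos [_ [_ [_ [_ [Hex Hsg]]]]]]] [x1 E1].
  exists x1. split. exact E1.
  intros x2 E2.
  destruct (Req_dec x1 x2) as [e|ne]. exact e. exfalso.
  destruct E1 as [p1 a1]. destruct E2 as [p2 a2].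
  unfold alpha in a1, a2.
  set (h := fun y => mass kappa y * / y^2).
  assert (Hh : forall x, 0 < x -> alpha kappa x = x -> h x = 1/2).
  { intros x px ax. unfold alpha in ax. unfold h.
    assert (mass kappa x = x^2/2).
    { apply (Rmult_eq_reg_l (2/x)). rewrite ax. field. lra.
      apply Rmult_integral_contrapositive; split; [lra|]. apply Rinv_neq_0_compat; lra. }
    rewrite H. field. lra. }
  assert (Hmin : 0 < Rmin x1 x2) by (apply Rmin_glb_lt; lra).
  destruct (MVT_gen h x1 x2
     (fun c => kappa c * c * / c^2 + mass kappa c * (- (2*c) / (c^2)^2))) as [c [Hcint Heq]].
  - intros x Hx. apply h_derive; auto. lra.
  - intros x Hx. apply continuity_pt_filterlim. apply (@ex_derive_continuous R_AbsRing R_NormedModule).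
    eexists. apply h_derive; auto. lra.
  - assert (pc : 0 < c) by lra.
    rewrite (Hh x1 p1 a1), (Hh x2 p2 a2) in Heq.
    assert (D0 : kappa c * c * / c^2 + mass kappa c * (- (2*c) / (c^2)^2) = 0).
    { assert (x2 - x1 <> 0) by lra.
      apply (Rmult_eq_reg_r (x2 - x1)); auto. lra. }
    pose proof (Hsg c pc) as S. unfold kbar in S.
    assert (kappa c = 2 / c^2 * mass kappa c).
    { apply (Rmult_eq_reg_l (/ c)). 2: apply Rinv_neq_0_compat; lra.
      transitivity (kappa c * c * / c^2). field; lra.
      transitivity (kappa c * c * / c^2 - (kappa c * c * / c^2 + mass kappa c * (- (2*c) / (c^2)^2))).
      rewrite D0; ring. field; lra. }
    lra.
Qed.
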